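(* For every $t \in \mathrm{Lie}(\mathcal{PT})$ and all $\alpha_1,\alpha_2 \in S(\mathcal{PA})$, \[ \rho(t)(\alpha_1\alpha_2)=\rho(t)(\alpha_1)\,\alpha_2+\alpha_1\,\rho(t)(\alpha_2). \]
   Context: Work over a fixed ground field. A planar rooted tree is a finite rooted tree, with edges oriented away from the root, together with a total order on the outgoing edges of each vertex; $\mathcal{PT}$ is the vector space spanned by isomorphism classes of planar rooted trees. $\mathrm{Lie}(\mathcal{PT})$ is the free Lie algebra on $\mathcal{PT}$, with bracket $[\cdot,\cdot]$. For planar trees $t_1,t_2$, the left grafting $t_1 \rhd t_2$ is the sum, over all vertices $v$ of $t_2$, of the planar tree obtained by adding an edge from $v$ to the root of $t_1$ as the leftmost (first) outgoing edge of $v$. It is extended to $\mathrm{Lie}(\mathcal{PT})$ by the rules \[ t_1\rhd[t_2,t_3]=[t_1\rhd t_2,t_3]+[t_2,t_1\rhd t_3], \] \[ [t_1,t_2]\rhd t_3=t_1\rhd(t_2\rhd t_3)-(t_1\rhd t_2)\rhd t_3-t_2\rhd(t_1\rhd t_3)+(t_2\rhd t_1)\rhd t_3. \] A planar aroma is an isomorphism class of finite connected directed graphs (loops allowed) in which every vertex has exactly one incoming edge, together with a total order on the outgoing edges of each vertex. $\mathcal{PA}$ is their span and $S(\mathcal{PA})$ is the symmetric algebra on $\mathcal{PA}$; its monomials are finite multisets of planar aromas. For a planar tree $t$ and a monomial $\alpha \in S(\mathcal{PA})$, $\rho(t)(\alpha)$ is the sum, over all vertices $v$ of all factors of $\alpha$,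 of the monomial obtained by adding an edge from $v$ to the root of $t$ as the leftmost outgoing edge of $v$; this is extended linearly in $\alpha$. For Lie polynomials $\rho$ is defined recursively by \[ \rho([t_1,t_2])(\alpha)=\rho(t_1)(\rho(t_2)(\alpha))-\rho(t_1\rhd t_2)(\alpha)-\rho(t_2)(\rho(t_1)(\alpha))+\rho(t_2\rhd t_1)(\alpha). \] *)

(* Defs.v *)
From HB Require Import structures.
From mathcomp Require Import all_boot all_order all_algebra.
Set Implicit Arguments. Unset Strict Implicit. Unset Printing Implicit Defensive.
Import GRing.Theory.
Local Open Scope ring_scope.

(* Planar trees are rigid, so isomorphism classes of planar rooted     *)
(* trees are exactly the elements of this inductive type.              *)
Inductive ptree := PNode of seq ptree.

Fixpoint ptree_enc (t : ptree) : GenTree.tree unit :=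
  let: PNode s := t in GenTree.Node 0 (map ptree_enc s).

Fixpoint ptree_dec (g : GenTree.tree unit) : option ptree :=
  match g with
  | GenTree.Leaf _ => None
  | GenTree.Node _ l => Some (PNode (pmap ptree_dec l))
  end.

Lemma ptree_encK : pcancel ptree_enc ptree_dec.
Proof.
move=> t; move: t; fix IH 1 => -[s] /=; congr (Some (PNode _)).
elim: s => [|u s IHs] //=; by rewrite IH IHs.
Qed.

HB.instance Definition _ := Countable.copy ptree (pcan_type ptree_encK).

Section OnePos.
Variables (X : Type) (f : X -> seq X).
Fixpoint onepos (s : seq X) : seq (seq X) :=
  match s with
  | [::] => [::]
  | x :: s' => [seq y :: s' | y <- f x] ++ [seq x :: s'' | s'' <- onepos s']
  end.
End OnePos.

(* graftT t u : the list (one entry per vertex v of u) of the planar trees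
   obtained by adding an edge from v to the root of t as the leftmost
   outgoing edge of v.  As a formal sum this is t |> u. *)
Fixpoint graftT (t u : ptree) {struct u} : seq ptree :=
  let: PNode s := u in PNode (t :: s) :: map PNode (onepos (graftT t) s).

(* Planar aromas.  A connected graph with exactly one incoming edge    *)
(* per vertex consists of one directed cycle v_0 -> v_1 -> ... -> v_0  *)
(* with planar trees hanging off.  A cycle vertex is encoded by        *)
(* (l, r) : its ordered outgoing edges are the edges to the roots of   *)
(* the trees of l, then the cycle edge to the next cycle vertex, then  *)
(* the edges to the roots of the trees of r.  An aroma is the          *)
(* (nonempty) list of its cycle vertices, read along the cycle, the    *)
(* last one pointing to the first (length 1 = a loop).  Two encodings  *)
(* are isomorphic iff one cycle list is a rotation of the other.       *)
Definition vdata := (seq ptree * seq ptree)%type.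
Definition aroma := (vdata * seq vdata)%type.
Definition cyc (a : aroma) : seq vdata := a.1 :: a.2.

Definition aroma_iso (a b : aroma) : bool :=
  has (fun n => rot n (cyc a) == cyc b) (iota 0 (size (cyc a))).

(* monomials of S(PA): finite multisets of planar aromas, represented
   by lists; two lists are isomorphic iff they agree as multisets of
   isomorphism classes of aromas. *)
Definition mono := seq aroma.
Definition mono_iso (m1 m2 : mono) : bool :=
  all (fun a => count (aroma_iso a) m1 == count (aroma_iso a) m2) (m1 ++ m2).

Definition graft_vd (t : ptree) (d : vdata) : seq vdata :=
  (t :: d.1, d.2) :: [seq (l', d.2) | l' <- onepos (graftT t) d.1]
                  ++ [seq (d.1, r') | r' <- onepos (graftT t) d.2].

Definition graft_ar (t : ptree) (a : aroma) : seq aroma :=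
  [seq (d', a.2) | d' <- graft_vd t a.1]
    ++ [seq (a.1, ds') | ds' <- onepos (graft_vd t) a.2].

Definition graft_mono (t : ptree) (m : mono) : seq mono :=
  onepos (graft_ar t) m.

Section Field.
Variable K : fieldType.

(* Elements of S(PA): formal K-linear combinations of monomials,       *)
(* considered up to the isomorphism of monomials (sa_eq below).        *)
Definition sa := seq (K * mono).
Definition sa_add (v w : sa) : sa := v ++ w.
Definition sa_scale (k : K) (v : sa) : sa := [seq (k * p.1, p.2) | p <- v].
Definition sa_sub (v w : sa) : sa := sa_add v (sa_scale (-1) w).
Definition sa_mul (v w : sa) : sa :=
  [seq (p.1 * q.1, p.2 ++ q.2) | p <- v, q <- w].

Definition sa_coef (v : sa) (m : mono) : K :=
  \sum_(p <- v | mono_iso p.2 m) p.1.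
Definition sa_eq (v w : sa) : Prop := forall m, sa_coef v m = sa_coef w m.

Definition rho_tree (t : ptree) (v : sa) : sa :=
  flatten [seq [seq (p.1, m') | m' <- graft_mono t p.2] | p <- v].

(* Lie(PT): Lie polynomials in planar trees, as syntax (every element  *)
(* of the free Lie algebra Lie(PT) is represented by such a term).     *)
Inductive lterm :=
| LGen of ptree
| LZero
| LAdd of lterm & lterm
| LScale of K & lterm
| LBr of lterm & lterm.

Definition lsub (a b : lterm) := LAdd a (LScale (-1) b).
Definition lsum (s : seq lterm) := foldr LAdd LZero s.

(* a degree used only to bound recursion (every term has degree >= 1,
   degree(a |> b) <= degree a + degree b - 1) *)
Fixpoint ldeg (a : lterm) : nat :=
  match a with
  | LGen _ => 1
  | LZero => 1
  | LAdd a b => maxn (ldeg a) (ldeg b)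
  | LScale _ a => ldeg a
  | LBr a b => ldeg a + ldeg b
  end.

Fixpoint graftTL (t : ptree) (b : lterm) : lterm :=
  match b with
  | LGen u => lsum (map LGen (graftT t u))
  | LZero => LZero
  | LAdd b1 b2 => LAdd (graftTL t b1) (graftTL t b2)
  | LScale k b1 => LScale k (graftTL t b1)
  | LBr b1 b2 => LAdd (LBr (graftTL t b1) b2) (LBr b1 (graftTL t b2))
  end.

(* Recursion on the degree of the left argument via fuel n; the result
   is correct as soon as ldeg a <= n. *)
Fixpoint graft_fuel (n : nat) (a b : lterm) {struct n} : lterm :=
  (fix go (a b : lterm) {struct a} : lterm :=
     match a with
     | LGen t => graftTL t b
     | LZero => LZero
     | LAdd a1 a2 => LAdd (go a1 b) (go a2 b)
     | LScale k a1 => LScale k (go a1 b)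
     | LBr a1 a2 =>
         if n is n'.+1 then
           let g := graft_fuel n' in
           LAdd (lsub (lsub (g a1 (g a2 b)) (g (g a1 a2) b)) (g a2 (g a1 b)))
                (g (g a2 a1) b)
         else LZero
     end) a b.

Definition lgraft (a b : lterm) : lterm := graft_fuel (ldeg a) a b.

(* rho on Lie polynomials, linear in t, with
   rho([a1,a2]) = rho(a1) rho(a2) - rho(a1|>a2) - rho(a2) rho(a1) + rho(a2|>a1).
   Again fuel n, correct as soon as ldeg a <= n. *)
Fixpoint rho_fuel (n : nat) (a : lterm) (v : sa) {struct n} : sa :=
  (fix go (a : lterm) (v : sa) {struct a} : sa :=
     match a with
     | LGen t => rho_tree t v
     | LZero => [::]
     | LAdd a1 a2 => sa_add (go a1 v) (go a2 v)
     | LScale k a1 => sa_scale k (go a1 v)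
     | LBr a1 a2 =>
         if n is n'.+1 then
           let r := rho_fuel n' in
           sa_add (sa_sub (sa_sub (r a1 (r a2 v)) (r (lgraft a1 a2) v))
                          (r a2 (r a1 v)))
                  (r (lgraft a2 a1) v)
         else [::]
     end) a v.

Definition rho (a : lterm) (v : sa) : sa := rho_fuel (ldeg a) a v.

End Field.

(* Main.v *)
Require Import Defs.
From mathcomp Require Import all_boot all_order all_algebra.
From mathcomp Require Import ring.
Set Implicit Arguments. Unset Strict Implicit. Unset Printing Implicit Defensive.
Import GRing.Theory.
Local Open Scope ring_scope.

Section Proof.
Variable K : fieldType.

Definition pair (v : sa K) (F : mono -> K) : K := \sum_(p <- v) p.1 * F p.2.

Lemma pair_cat v w F : pair (v ++ w) F = pair v F + pair w F.
Proof. by rewrite /pair big_cat. Qed.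

Lemma pair_nil F : pair [::] F = 0.
Proof. by rewrite /pair big_nil. Qed.

Lemma pair_scale k v F : pair (sa_scale k v) F = k * pair v F.
Proof.
rewrite /pair /sa_scale big_map big_distrr /=.
by apply: eq_bigr => p _; rewrite mulrA.
Qed.

Lemma pair_add v w F : pair (sa_add v w) F = pair v F + pair w F.
Proof. exact: pair_cat. Qed.

Lemma pair_sub v w F : pair (sa_sub v w) F = pair v F - pair w F.
Proof. by rewrite /sa_sub pair_add pair_scale mulN1r. Qed.

Lemma pair_mul v w F :
  pair (sa_mul v w) F = pair v (fun m => \sum_(q <- w) q.1 * F (m ++ q.2)).
Proof.
rewrite /pair /sa_mul big_allpairs_dep /=.
apply: eq_bigr => p _; rewrite big_distrr /=.
by apply: eq_bigr => q _; rewrite !mulrA [p.1 * _]mulrC.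
Qed.

Lemma pair_mul_r v w F :
  pair (sa_mul v w) F = pair w (fun m => \sum_(p <- v) p.1 * F (p.2 ++ m)).
Proof.
rewrite pair_mul /pair.
under eq_bigr do rewrite big_distrr.
rewrite exchange_big /=.
apply: eq_bigr => q _; rewrite big_distrr /=.
by apply: eq_bigr => p _; rewrite !mulrA [p.1 * _]mulrC.
Qed.

Lemma pair_Fadd v F G : pair v (fun m => F m + G m) = pair v F + pair v G.
Proof. by rewrite /pair -big_split /=; apply: eq_bigr => p _; rewrite mulrDr. Qed.

Lemma pair_Fscale v k F : pair v (fun m => k * F m) = k * pair v F.
Proof.
rewrite /pair big_distrr; apply: eq_bigr => p _ /=.
by rewrite !mulrA [p.1 * _]mulrC.
Qed.

Lemma pair_F0 v : pair v (fun _ => 0) = 0.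
Proof. by rewrite /pair big1 // => p _; rewrite mulr0. Qed.

Lemma mulsa_addl x y w F :
  pair (sa_mul (sa_add x y) w) F = pair (sa_mul x w) F + pair (sa_mul y w) F.
Proof. by rewrite !pair_mul pair_add. Qed.
Lemma mulsa_addr x y w F :
  pair (sa_mul w (sa_add x y)) F = pair (sa_mul w x) F + pair (sa_mul w y) F.
Proof. by rewrite !pair_mul_r pair_add. Qed.
Lemma mulsa_scalel k x w F :
  pair (sa_mul (sa_scale k x) w) F = k * pair (sa_mul x w) F.
Proof. by rewrite !pair_mul pair_scale. Qed.
Lemma mulsa_scaler k x w F :
  pair (sa_mul w (sa_scale k x)) F = k * pair (sa_mul w x) F.
Proof. by rewrite !pair_mul_r pair_scale. Qed.
Lemma mulsa_subl x y w F :
  pair (sa_mul (sa_sub x y) w) F = pair (sa_mul x w) F - pair (sa_mul y w) F.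
Proof. by rewrite /sa_sub mulsa_addl mulsa_scalel mulN1r. Qed.
Lemma mulsa_subr x y w F :
  pair (sa_mul w (sa_sub x y)) F = pair (sa_mul w x) F - pair (sa_mul w y) F.
Proof. by rewrite /sa_sub mulsa_addr mulsa_scaler mulN1r. Qed.

Definition adj (f : sa K -> sa K) :=
  exists g : (mono -> K) -> (mono -> K), forall v F, pair (f v) F = pair v (g F).
Definition der (f : sa K -> sa K) :=
  forall v w F, pair (f (sa_mul v w)) F
                = pair (sa_mul (f v) w) F + pair (sa_mul v (f w)) F.
Definition good f := adj f /\ der f.

Lemma good_ext f g : (forall v, f v = g v) -> good g -> good f.
Proof.
move=> e [[h Hh] Hd]; split.
  by exists h => v F; rewrite e Hh.
by move=> v w F; rewrite !e Hd.
Qed.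

Lemma adj_resp f x y F : adj f -> (forall G, pair x G = pair y G) ->
  pair (f x) F = pair (f y) F.
Proof. by move=> [g Hg] e; rewrite !Hg e. Qed.

Lemma adj_add f x y F : adj f -> pair (f (sa_add x y)) F = pair (f x) F + pair (f y) F.
Proof. by move=> [g Hg]; rewrite !Hg pair_add. Qed.

Lemma good_zero : good (fun _ => [::]).
Proof.
split; first by exists (fun _ _ => 0) => v F /=; rewrite pair_nil pair_F0.
move=> v w F /=; rewrite !pair_mul /pair !big_nil add0r.
by rewrite big1 // => p _; rewrite big_nil mulr0.
Qed.

Lemma good_add f g : good f -> good g -> good (fun v => sa_add (f v) (g v)).
Proof.
move=> [[f' Hf] Df] [[g' Hg] Dg]; split.
  by exists (fun F m => f' F m + g' F m) => v F /=; rewrite pair_add Hf Hg pair_Fadd.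
move=> v w F /=; rewrite pair_add Df Dg mulsa_addl mulsa_addr.
ring.
Qed.

Lemma good_scale k f : good f -> good (fun v => sa_scale k (f v)).
Proof.
move=> [[f' Hf] Df]; split.
  by exists (fun F m => k * f' F m) => v F /=; rewrite pair_scale Hf pair_Fscale.
move=> v w F /=; rewrite pair_scale Df mulsa_scalel mulsa_scaler.
ring.
Qed.

Lemma comp_der f g v w F : good f -> good g ->
  pair (f (g (sa_mul v w))) F =
  pair (sa_mul (f (g v)) w) F + pair (sa_mul (g v) (f w)) F
  + pair (sa_mul (f v) (g w)) F + pair (sa_mul v (f (g w))) F.
Proof.
move=> [Af Df] [Ag Dg].
rewrite (@adj_resp f _ (sa_add (sa_mul (g v) w) (sa_mul v (g w)))) //; last first.
  by move=> G; rewrite Dg pair_add.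
by rewrite adj_add // !Df; ring.
Qed.

Lemma good_br f1 f2 h1 h2 : good f1 -> good f2 -> good h1 -> good h2 ->
  good (fun v => sa_add (sa_sub (sa_sub (f1 (f2 v)) (h1 v)) (f2 (f1 v))) (h2 v)).
Proof.
move=> G1 G2 H1 H2.
have [[a1 A1] D1] := G1; have [[a2 A2] D2] := G2.
have [[b1 B1] E1] := H1; have [[b2 B2] E2] := H2.
split.
  exists (fun F m => a2 (a1 F) m - b1 F m - a1 (a2 F) m + b2 F m) => v F /=.
  rewrite pair_add !pair_sub A1 A2 B1 B2 A2 A1.
  rewrite /pair -!sumrB -big_split /=; apply: eq_bigr => p _; ring.
move=> v w F /=.
rewrite pair_add !pair_sub (comp_der _ _ _ G1 G2) (comp_der _ _ _ G2 G1) E1 E2.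
rewrite mulsa_addl !mulsa_subl mulsa_addr !mulsa_subr.
ring.
Qed.


Lemma onepos_cat (X : Type) (f : X -> seq X) s1 s2 :
  onepos f (s1 ++ s2) =
  [seq y ++ s2 | y <- onepos f s1] ++ [seq s1 ++ y | y <- onepos f s2].
Proof.
elim: s1 => [|x s1 IH] /=; first by rewrite map_id.
rewrite IH !map_cat -!map_comp catA.
congr (_ ++ _); congr (_ ++ _).
Qed.

Definition gsum t (F : mono -> K) (m : mono) := \sum_(m' <- graft_mono t m) F m'.

Lemma rho_tree_adj t v F : pair (rho_tree t v) F = pair v (gsum t F).
Proof.
rewrite /pair /rho_tree big_flatten big_map; apply: eq_bigr => p _.
rewrite big_map big_distrr /=; done.
Qed.

Lemma gsum_cat t F m1 m2 : gsum t F (m1 ++ m2) =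
  \sum_(m' <- graft_mono t m1) F (m' ++ m2) + \sum_(m' <- graft_mono t m2) F (m1 ++ m').
Proof. by rewrite /gsum /graft_mono onepos_cat big_cat !big_map. Qed.

Lemma good_tree t : good (rho_tree t).
Proof.
split; first by exists (gsum t) => v F; exact: rho_tree_adj.
move=> v w F.
rewrite rho_tree_adj pair_mul pair_mul rho_tree_adj pair_mul.
rewrite -pair_Fadd /pair; apply: eq_bigr => p _; congr (_ * _).
under eq_bigr do rewrite gsum_cat mulrDr.
rewrite big_split /=; congr (_ + _).
  rewrite /gsum exchange_big /=.
  by apply: eq_bigr => q _; rewrite big_distrr.
symmetry; exact: (rho_tree_adj t w (fun m' => F (p.2 ++ m'))).

Qed.

Lemma good_rho n a : good (rho_fuel n a).
Proof.
elim: n a => [|n IHn] a.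
  elim: a => [t||a1 IH1 a2 IH2|k a1 IH1|a1 IH1 a2 IH2] /=.
  - exact: good_tree.
  - exact: good_zero.
  - by apply: (good_ext _ (good_add IH1 IH2)).
  - by apply: (good_ext _ (good_scale k IH1)).
  - exact: good_zero.
elim: a => [t||a1 IH1 a2 IH2|k a1 IH1|a1 IH1 a2 IH2] /=.
- exact: good_tree.
- exact: good_zero.
- by apply: (good_ext _ (good_add IH1 IH2)).
- by apply: (good_ext _ (good_scale k IH1)).
- apply: (good_ext _ (good_br (IHn a1) (IHn a2) (IHn (lgraft a1 a2)) (IHn (lgraft a2 a1)))).
  by [].
Qed.

End Proof.

Theorem mainTheorem1 (K : fieldType) (t : lterm K) (a1 a2 : sa K) :
  sa_eq (rho t (sa_mul a1 a2))
        (sa_add (sa_mul (rho t a1) a2) (sa_mul a1 (rho t a2))).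
Proof.
have [_ D] := good_rho (ldeg t) t.
move=> m.
have E (v : sa K) : sa_coef v m = pair v (fun m' => if mono_iso m' m then 1 else 0).
  rewrite /sa_coef /pair big_mkcond /=; apply: eq_bigr => p _.
  by case: ifP; rewrite ?mulr1 ?mulr0.
by rewrite !E /rho D pair_add.
Qed.
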